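(* In the setting of the multi-dimensional system $\frac{d\boldsymbol{x}}{dt}=\mathbf{A}\boldsymbol{x}+\mathbf{B}_p\boldsymbol{p}+\mathbf{B}_d\boldsymbol{d}$ on $\mathcal{T}=[0,t_f]$ (with $\mathbf{A}$ having non-positive diagonal and non-negative off-diagonal entries, $\mathbf{B}_p\ge0$ entrywise, given $\boldsymbol{d}$ and $\boldsymbol{x}_0$, power bounds $\boldsymbol{0}\le\boldsymbol{p}_{\min}\le\boldsymbol{p}_{\max}$, state bounds $\boldsymbol{x}_{\min}\le\boldsymbol{x}_{\max}$), let $\boldsymbol{\alpha}(t),\boldsymbol{\beta}(t)$ and $\boldsymbol{b}_\pm(t)$ be defined as follows: $\alpha_{i,j}(t)=\max_{0\le\tau\le t}(e^{\mathbf{A}(t-\tau)}\mathbf{B}_p)_{i,j}$, $\beta_{i,j}(t)=\min_{0\le\tau\le t}(e^{\mathbf{A}(t-\tau)}\mathbf{B}_p)_{i,j}$, and $\boldsymbol{b}_\pm(t)=\int_0^t e^{\mathbf{A}(t-\tau)}\mathbf{B}_p\boldsymbol{p}_\pm(\tau)\,d\tau$, where $\boldsymbol{p}_\pm$ are feasible power trajectories (satisfying the power bounds and, with the same $\boldsymbol{x}_0,\boldsymbol{d}$, the state bounds for all $t$). For each $t\in\mathcal{T}$ let $\big(\mathbf{E}^{\mathrm{TI,d}}_{\mathrm{up}}(t),\mathbf{E}^{\mathrm{TI,d}}_{\mathrm{down}}(t)\big)\in\mathbb{R}^{N_p}\times\mathbb{R}^{N_p}$ be an optimal solution (assumed to exist)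 of $$\max_{\mathbf{E}_+,\mathbf{E}_-}\ \sum_{i=1}^{N_p}\ln(\mathrm{E}_{+,i}-\mathrm{E}_{-,i})\quad\text{s.t.}\quad \boldsymbol{\alpha}(t)\mathbf{E}_+\le\boldsymbol{b}_+(t),\ \ \boldsymbol{\beta}(t)\mathbf{E}_-\ge\boldsymbol{b}_-(t),\ \ \mathbf{E}_+\ge\mathbf{E}_-.$$ If a power trajectory $\boldsymbol{p}_a$ satisfies $\boldsymbol{p}_{\min}\le\boldsymbol{p}_a(t)\le\boldsymbol{p}_{\max}$ and, for every input index $i$ and all $t\in\mathcal{T}$, $$\mathrm{E}^{\mathrm{TI,d}}_{\mathrm{down},i}(t)\le\int_0^t p_{a,i}(\tau)\,d\tau\le\mathrm{E}^{\mathrm{TI,d}}_{\mathrm{up},i}(t),$$ then the resulting state $\boldsymbol{x}_a$ (same $\boldsymbol{x}_0$, $\boldsymbol{d}$) satisfies $\boldsymbol{x}_{\min}\le\boldsymbol{x}_a(t)\le\boldsymbol{x}_{\max}$ for all $t\in\mathcal{T}$.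
   Context: Vector inequalities and integrals are componentwise. The optimization problem describes the largest (in volume) axis-aligned box inscribed in the polytope $\{\mathbf{E}:\boldsymbol{\alpha}(t)\mathbf{E}\le\boldsymbol{b}_+(t),\ \boldsymbol{\beta}(t)\mathbf{E}\ge\boldsymbol{b}_-(t)\}$. States are given by $\boldsymbol{x}(t)=e^{\mathbf{A}t}\boldsymbol{x}_0+\int_0^t e^{\mathbf{A}(t-\tau)}(\mathbf{B}_d\boldsymbol{d}(\tau)+\mathbf{B}_p\boldsymbol{p}(\tau))\,d\tau$. *)

(* Defs.v *)
From HB Require Import structures.
From mathcomp Require Import all_boot all_order all_algebra.
From mathcomp Require Import all_classical all_reals all_analysis.
Set Implicit Arguments. Unset Strict Implicit. Unset Printing Implicit Defensive.
Import Order.TTheory GRing.Theory Num.Theory.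
Import numFieldNormedType.Exports.
Local Open Scope classical_set_scope.
Local Open Scope ring_scope.

Section Defs.
Variable R : realType.

Definition expm (n : nat) (A : 'M[R]_n) (s : R) : 'M[R]_n :=
  \matrix_(i, j) limn (fun N => \sum_(k < N) ((s ^+ k / (k`!)%:R) *: A ^+ k) i j).

Definition leb := (@lebesgue_measure R).

Definition state (Nx Np Nd : nat) (A : 'M[R]_Nx) (Bp : 'M[R]_(Nx, Np))
  (Bd : 'M[R]_(Nx, Nd)) (x0 : 'cV[R]_Nx) (d : R -> 'cV[R]_Nd)
  (p : R -> 'cV[R]_Np) (t : R) : 'cV[R]_Nx :=
  expm A t *m x0 +
  \col_i (\int[leb]_(tau in `[0, t]%classic)
            ((expm A (t - tau) *m (Bd *m d tau + Bp *m p tau)) i 0)).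

Definition vle (m n : nat) (u v : 'M[R]_(m, n)) : Prop := forall i j, u i j <= v i j.

Definition power_ok (Np : nat) (tf : R) (pmin pmax : 'cV[R]_Np)
  (p : R -> 'cV[R]_Np) : Prop :=
  forall t, 0 <= t <= tf -> vle pmin (p t) /\ vle (p t) pmax.

Definition feasible (Nx Np Nd : nat) (A : 'M[R]_Nx) (Bp : 'M[R]_(Nx, Np))
  (Bd : 'M[R]_(Nx, Nd)) (x0 : 'cV[R]_Nx) (d : R -> 'cV[R]_Nd) (tf : R)
  (pmin pmax : 'cV[R]_Np) (xmin xmax : 'cV[R]_Nx) (p : R -> 'cV[R]_Np) : Prop :=
  (forall i, measurable_fun setT (fun t => p t i 0)) /\
  power_ok tf pmin pmax p /\
  forall t, 0 <= t <= tf ->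
    vle xmin (state A Bp Bd x0 d p t) /\ vle (state A Bp Bd x0 d p t) xmax.

(* alpha_{ij}(t) = max_{0<=tau<=t} (e^{A(t-tau)} Bp)_{ij}  (attained: continuity) *)
Definition alpha (Nx Np : nat) (A : 'M[R]_Nx) (Bp : 'M[R]_(Nx, Np)) (t : R)
  : 'M[R]_(Nx, Np) :=
  \matrix_(i, j) sup [set (expm A (t - tau) *m Bp) i j | tau in `[0, t]%classic].

Definition beta (Nx Np : nat) (A : 'M[R]_Nx) (Bp : 'M[R]_(Nx, Np)) (t : R)
  : 'M[R]_(Nx, Np) :=
  \matrix_(i, j) inf [set (expm A (t - tau) *m Bp) i j | tau in `[0, t]%classic].

Definition bvec (Nx Np : nat) (A : 'M[R]_Nx) (Bp : 'M[R]_(Nx, Np))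
  (p : R -> 'cV[R]_Np) (t : R) : 'cV[R]_Nx :=
  \col_i (\int[leb]_(tau in `[0, t]%classic) ((expm A (t - tau) *m Bp *m p tau) i 0)).

Definition objective (Np : nat) (Ep Em : 'cV[R]_Np) : \bar R :=
  if [forall i, Em i 0 < Ep i 0] then (\sum_i ln (Ep i 0 - Em i 0))%:E else -oo%E.

Definition opt_feasible (Nx Np : nat) (al be : 'M[R]_(Nx, Np)) (bp bm : 'cV[R]_Nx)
  (Ep Em : 'cV[R]_Np) : Prop :=
  vle (al *m Ep) bp /\ vle bm (be *m Em) /\ vle Em Ep.

Definition optimal (Nx Np : nat) (al be : 'M[R]_(Nx, Np)) (bp bm : 'cV[R]_Nx)
  (Ep Em : 'cV[R]_Np) : Prop :=
  opt_feasible al be bp bm Ep Em /\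
  forall Ep' Em', opt_feasible al be bp bm Ep' Em' ->
    (objective Ep' Em' <= objective Ep Em)%E.

End Defs.

(* Main.v *)
Require Import Defs.
From HB Require Import structures.
From mathcomp Require Import all_boot all_order all_algebra.
From mathcomp Require Import all_classical all_reals all_analysis.
From mathcomp Require Import measurable_realfun.
Import Order.TTheory GRing.Theory Num.Theory.
Import numFieldNormedType.Exports.
Local Open Scope classical_set_scope.
Local Open Scope ring_scope.
Set Implicit Arguments. Unset Strict Implicit. Unset Printing Implicit Defensive.
Lemma conv_id (R : realType) (a b : nat -> R) N :
  \sum_(k < N) \sum_(i < k.+1) a i * b (k - i)%N =
  \sum_(i < N) a i * \sum_(l < (N - i)%N) b l.
Proof.
elim: N => [|N IH]; first by rewrite !big_ord0.
rewrite big_ord_recr /= IH [RHS]big_ord_recr /= subSnn big_ord1.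
rewrite big_ord_recr /= subnn addrA; congr (_ + _).
rewrite -big_split /=; apply: eq_bigr => i _.
have hi : (i <= N)%N by rewrite ltnW.
rewrite subSn // big_ord_recr /= mulrDr; done.
Qed.
Lemma diff_bound (R : realType) (b : nat -> R) m d :
  `|\sum_(l < m + d) b l - \sum_(l < m) b l| <=
  \sum_(l < m + d) `|b l| - \sum_(l < m) `|b l|.
Proof.
elim: d => [|d IH]; first by rewrite addn0 !subrr normr0.
rewrite addnS !big_ord_recr /=.
rewrite (addrC (\sum_(i < m + d) b i)) -addrA (addrC (\sum_(i < m + d) `|b i|)) -addrA.
apply: le_trans (ler_normD _ _) _.
by rewrite lerD2l.
Qed.

Lemma diff_bound' (R : realType) (b : nat -> R) m N : (m <= N)%N ->
  `|\sum_(l < N) b l - \sum_(l < m) b l| <=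
  \sum_(l < N) `|b l| - \sum_(l < m) `|b l|.
Proof. by move=> /subnKC <-; apply: diff_bound. Qed.

Lemma sum_abs_mono (R : realType) (b : nat -> R) m N : (m <= N)%N ->
  \sum_(l < m) `|b l| <= \sum_(l < N) `|b l|.
Proof.
move=> /(@diff_bound' _ b m N) h; rewrite -subr_ge0; exact: le_trans (normr_ge0 _) h.
Qed.
Lemma half_oo : (fun N => N./2) @ \oo --> \oo.
Proof.
move=> P [M _ PM]; exists M.*2 => // n /= Mn; apply: PM => /=.
by rewrite -(half_double M) half_leq.
Qed.

Lemma cauchy_prod (R : realType) (a b : nat -> R) (LA LB : R) :
  (fun N => \sum_(i < N) a i) @ \oo --> LA ->
  (fun N => \sum_(i < N) b i) @ \oo --> LB ->
  cvgn (fun N => \sum_(i < N) `|a i|) ->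
  cvgn (fun N => \sum_(i < N) `|b i|) ->
  (fun N => \sum_(k < N) \sum_(i < k.+1) a i * b (k - i)%N) @ \oo --> LA * LB.
Proof.
move=> hA hB hHA hHB.
pose SA N := \sum_(i < N) a i.
pose SB N := \sum_(i < N) b i.
pose HA N := \sum_(i < N) `|a i|.
pose HB N := \sum_(i < N) `|b i|.
pose D N := \sum_(i < N) a i * (SB N - SB (N - i)%N).
pose g N := HA N * HB N - HA N./2 * HB N./2.
have eqC N : \sum_(k < N) \sum_(i < k.+1) a i * b (k - i)%N = SA N * SB N - D N.
  rewrite conv_id /SA /D mulr_suml -sumrB; apply: eq_bigr => i _.
  by rewrite mulrBr opprB addrC subrK.
have bnd N : `|D N| <= g N.
  apply: le_trans (ler_norm_sum _ _ _) _.
  apply: (@le_trans _ _ (\sum_(i < N) `|a i| * (HB N - HB (N - i)%N))).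
    apply: ler_sum => i _; rewrite normrM ler_wpM2l //.
    by apply: diff_bound'; rewrite leq_subr.
  under eq_bigr do rewrite mulrBr.
  rewrite sumrB -mulr_suml /g lerD2l lerN2.
  have h2 : (N./2 <= N)%N by rewrite -{2}(odd_double_half N) -addnn addnA leq_addl.
  rewrite /HA mulr_suml (big_ord_widen _ (fun i => `|a i| * HB N./2) h2).
  rewrite big_mkcond /=; apply: ler_sum => i _.
  case: ifP => hi; last by rewrite mulr_ge0 // sumr_ge0.
  rewrite ler_wpM2l //; apply: sum_abs_mono.
  rewrite leq_subRL; last exact: ltnW (leq_trans hi h2).
  rewrite -{3}(odd_double_half N) -addnn addnA leq_add2r.
  exact: leq_trans (ltnW hi) (leq_addl _ _).
have hD : D @ \oo --> 0.
  have hg : g @ \oo --> 0.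
    have hHA' := cvg_comp _ _ half_oo hHA.
    have hHB' := cvg_comp _ _ half_oo hHB.
    rewrite -(subrr (limn HA * limn HB)).
    apply: cvgB; apply: cvgM => //.
  apply: (@squeeze_cvgr _ _ _ _ (- g) g).
  - by near=> N; rewrite -ler_norml bnd.
  - by rewrite -oppr0; apply: cvgN.
  - exact: hg.
rewrite (_ : (fun N => _) = (fun N => SA N * SB N - D N)); last by apply/funext => N; apply: eqC.
rewrite -(subr0 (LA * LB)); apply: cvgB => //; exact: cvgM.
Unshelve. all: by end_near.
Qed.

Lemma seriesE (R : realType) (u : nat -> R) : series u = (fun N => \sum_(k < N) u k).
Proof. by apply/funext => N; rewrite /series /= big_mkord. Qed.

Lemma expmE (R : realType) n (A : 'M[R]_n) s i j :
  expm A s i j = limn (fun N => \sum_(k < N) s ^+ k / (k`!)%:R * (A ^+ k) i j).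
Proof.
rewrite /expm mxE; do 3 f_equal; apply/funext => N; apply: eq_bigr => k _.
by rewrite mxE.
Qed.

Lemma pow_bound (R : realType) n (A : 'M[R]_n) m :
  (forall i j, `|A i j| <= m) -> 0 <= m ->
  forall k i j, `|(A ^+ k) i j| <= (n%:R * m) ^+ k.
Proof.
move=> hA m0; elim=> [|k IH] i j.
  rewrite expr0 expr0 mxE; case: (i == j) => /=; by rewrite ?normr1 ?normr0.
rewrite exprSr -mulmxE mxE.
apply: le_trans (ler_norm_sum _ _ _) _.
apply: (@le_trans _ _ (\sum_(l < n) (n%:R * m) ^+ k * m)).
  apply: ler_sum => l _; rewrite normrM; exact: ler_pM (normr_ge0 _) (normr_ge0 _) (IH _ _) (hA _ _).
by rewrite sumr_const card_ord exprSr -mulrnAr mulr_natl.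
Qed.

Lemma term_bound (R : realType) n (A : 'M[R]_n) m s k i j :
  (forall i j, `|A i j| <= m) -> 0 <= m ->
  `|s ^+ k / (k`!)%:R * (A ^+ k) i j| <= exp_coeff (`|s| * (n%:R * m)) k.
Proof.
move=> hA m0; rewrite exp_coeffE /= normrM normrM normrX exprMn normfV (ger0_norm (x:=k`!%:R)) // (mulrC (`|s| ^+ k)) -mulrA.
rewrite ler_wpM2l // ler_wpM2l //; exact: pow_bound.
Qed.

Lemma mat_bound (R : realType) n m' (A : 'M[R]_(n, m')) :
  exists m, 0 <= m /\ forall i j, `|A i j| <= m.
Proof.
exists (\sum_i \sum_j `|A i j|); split; first by do 2 (apply: sumr_ge0 => ? _).
move=> i j; apply: (@le_trans _ _ (\sum_j `|A i j|)).
  by rewrite (bigD1 j) //= lerDl sumr_ge0.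
rewrite (bigD1 i) //= lerDl sumr_ge0 // => k _; exact: sumr_ge0.
Qed.

Lemma expB_le (R : realType) (x : R) N : 0 <= x ->
  \sum_(k < N) exp_coeff x k <= expR x.
Proof.
move=> x0.
have hh : {homo series (exp_coeff x) : n m / (n <= m)%N >-> n <= m}.
  by apply: nondecreasing_series => k _ _; exact: exp_coeff_ge0.
have := nondecreasing_cvgn_le hh (is_cvg_series_exp_coeff x) N.
by rewrite /series /= big_mkord.
Qed.

Lemma cvg_sumE (R : realType) (u : nat -> R) :
  cvgn (series u) -> cvgn (fun N => \sum_(k < N) u k).
Proof. by rewrite seriesE. Qed.

Lemma expm_cvg_abs (R : realType) n (A : 'M[R]_n) s i j :
  cvgn (fun N => \sum_(k < N) `|s ^+ k / (k`!)%:R * (A ^+ k) i j|).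
Proof.
have [m [m0 hA]] := mat_bound A.
apply: (@cvg_sumE _ (fun k => `|s ^+ k / (k`!)%:R * (A ^+ k) i j|)); apply: (@series_le_cvg _ _ (exp_coeff (`|s| * (n%:R * m)))) => //.
- by move=> k; apply: exp_coeff_ge0; rewrite mulr_ge0 // mulr_ge0.
- by move=> k; exact: term_bound.
- exact: is_cvg_series_exp_coeff.
Qed.

Lemma expm_cvg (R : realType) n (A : 'M[R]_n) s i j :
  cvgn (fun N => \sum_(k < N) s ^+ k / (k`!)%:R * (A ^+ k) i j).
Proof.
apply: (@cvg_sumE _ (fun k => s ^+ k / (k`!)%:R * (A ^+ k) i j)); apply: normed_cvg.
rewrite (_ : [normed series _] = fun N => \sum_(k < N) `|s ^+ k / (k`!)%:R * (A ^+ k) i j|); first exact: expm_cvg_abs.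
by apply/funext => N; rewrite /normed_series_of /series /= big_mkord.
Qed.

Lemma expm_bound (R : realType) n (A : 'M[R]_n) m s i j :
  (forall i j, `|A i j| <= m) -> 0 <= m ->
  `|expm A s i j| <= expR (`|s| * (n%:R * m)).
Proof.
move=> hA m0; rewrite expmE.
have hc := expm_cvg (A:=A) (s:=s) (i:=i) (j:=j).
have hb N : `|\sum_(k < N) s ^+ k / (k`!)%:R * (A ^+ k) i j| <= expR (`|s| * (n%:R * m)).
  apply: le_trans (ler_norm_sum _ _ _) _.
  apply: le_trans (expB_le N _); last by rewrite mulr_ge0 // mulr_ge0.
  by apply: ler_sum => k _; exact: term_bound.
rewrite ler_norml; apply/andP; split.
  by apply: limr_ge => //; apply: nearW => N; have := hb N; rewrite ler_norml => /andP[].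
by apply: limr_le => //; apply: nearW => N; have := hb N; rewrite ler_norml => /andP[].
Qed.
Lemma mul_scal_pow (R : realType) n (X : 'M[R]_n) c l :
  X * (c%:M) ^+ l = c ^+ l *: X.
Proof.
elim: l => [|l IH]; first by rewrite !expr0 mulr1 scale1r.
by rewrite exprSr mulrA IH -mulmxE mul_mx_scalar scalerA exprSr mulrC.
Qed.

Lemma binom_entry (R : realType) n (A : 'M[R]_n) c k i j :
  ((A + c%:M) ^+ k) i j = \sum_(l < k.+1) (c ^+ l * (A ^+ (k - l)) i j) *+ 'C(k, l).
Proof.
have hc : GRing.comm A (c%:M) by rewrite /GRing.comm -!mulmxE scalar_mxC.
rewrite exprDn_comm // summxE; apply: eq_bigr => l _.
by rewrite mulmxnE mul_scal_pow mxE.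
Qed.
From mathcomp Require Import ring.
Lemma scal_id (R : realType) (s c x : R) k l : (l <= k)%N ->
  s ^+ k / (k`!)%:R * ((c ^+ l * x) *+ 'C(k, l)) =
  exp_coeff (c * s) l * (s ^+ (k - l) / ((k - l)`!)%:R * x).
Proof.
move=> hl; rewrite exp_coeffE /=.
have hf : (k`!)%:R = ('C(k, l))%:R * ((l`!)%:R * ((k - l)`!)%:R) :> R.
  by rewrite -!natrM bin_fact.
have hs : s ^+ k = s ^+ l * s ^+ (k - l) by rewrite -exprD subnKC.
have h1 : (l`!)%:R != 0 :> R by rewrite pnatr_eq0 -lt0n fact_gt0.
have h2 : ((k - l)`!)%:R != 0 :> R by rewrite pnatr_eq0 -lt0n fact_gt0.
have h3 : ('C(k, l))%:R != 0 :> R by rewrite pnatr_eq0 -lt0n bin_gt0.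
rewrite hf hs -mulr_natr exprMn.
field.
by rewrite h1 h2 h3.
Qed.
Lemma expm_nonneg (R : realType) n (A : 'M[R]_n) s :
  0 <= s -> (forall i, A i i <= 0) -> (forall i j, i != j -> 0 <= A i j) ->
  forall i j, 0 <= expm A s i j.
Proof.
move=> s0 hd ho i j.
pose c := \sum_k `|A k k|.
have c0 : 0 <= c by apply: sumr_ge0.
have hc k : - A k k <= c.
  apply: (@le_trans _ _ `|A k k|); first by rewrite -normrN ler_norm.
  by rewrite /c (bigD1 k) //= lerDl sumr_ge0.
pose B := A + c%:M.
have hB k l : 0 <= B k l.
  rewrite !mxE; have [->|hkl] := eqVneq k l; first by rewrite mulr1n -lerBlDl sub0r hc.
  by rewrite mulr0n addr0 ho.
have hBk k : forall k1 l1, 0 <= (B ^+ k) k1 l1.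
  elim: k => [|k IH] k1 l1; first by rewrite expr0 mxE ler0n.
  rewrite exprSr -mulmxE mxE; apply: sumr_ge0 => m _; exact: mulr_ge0.
have eB : 0 <= expm B s i j.
  rewrite expmE; apply: limr_ge; first exact: expm_cvg.
  apply: nearW => N; apply: sumr_ge0 => k _; apply: mulr_ge0 => //.
  by rewrite divr_ge0 // exprn_ge0.
pose a := exp_coeff (c * s).
pose b k := s ^+ k / (k`!)%:R * (A ^+ k) i j.
have hcv : (fun N => \sum_(k < N) \sum_(l < k.+1) a l * b (k - l)%N) @ \oo --> expR (c * s) * expm A s i j.
  apply: cauchy_prod.
  - have h := is_cvg_series_exp_coeff (c * s); rewrite seriesE in h; rewrite /expR seriesE; exact: h.
  - rewrite expmE; exact: expm_cvg.
  - rewrite (_ : (fun N => _) = series (exp_coeff (c * s))); first exact: is_cvg_series_exp_coeff.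
    rewrite seriesE; apply/funext => N; apply: eq_bigr => k _; rewrite ger0_norm //.
    by apply: exp_coeff_ge0; rewrite mulr_ge0.
  - exact: expm_cvg_abs.
have eq : expm B s i j = expR (c * s) * expm A s i j.
  rewrite expmE; apply: cvg_lim => //.
  rewrite (_ : (fun N => _) = (fun N => \sum_(k < N) \sum_(l < k.+1) a l * b (k - l)%N)) //.
  apply/funext => N; apply: eq_bigr => k _.
  rewrite binom_entry mulr_sumr; apply: eq_bigr => l _.
  by rewrite scal_id // -ltnS.
move: eB; rewrite eq pmulr_rge0 //; exact: expR_gt0.
Qed.
Lemma expm_meas (R : realType) n (A : 'M[R]_n) (t : R) i j (D : set R) :
  measurable_fun D (fun tau => expm A (t - tau) i j).
Proof.
apply: measurable_fun_cvg; last first.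
  by move=> x _; rewrite expmE; exact: expm_cvg.
- move=> N; apply: measurable_sum => k.
  apply: measurable_funM => //; apply: measurable_funM => //.
  apply: measurable_funX; apply: measurable_funB => //.
Qed.

Lemma bounded_of (R : realType) (f : R -> R) (D : set R) (M : R) :
  (forall x, D x -> `|f x| <= M) -> [bounded f x | x in D].
Proof.
move=> hM; exists M; split; first exact: num_real.
move=> M' hM' x Dx; apply: le_trans (hM x Dx) _; exact: ltW.
Qed.

Lemma EC_meas (R : realType) n m (A : 'M[R]_n) (C : 'M[R]_(n, m)) (t : R) i l (D : set R) :
  measurable_fun D (fun tau => (expm A (t - tau) *m C) i l).
Proof.
rewrite (_ : (fun tau => _) = (fun tau => \sum_k expm A (t - tau) i k * C k l)); last first.
  by apply/funext => tau; rewrite mxE.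
apply: measurable_sum => k; apply: measurable_funM => //; exact: expm_meas.
Qed.

Lemma E_bnd (R : realType) n (A : 'M[R]_n) (t : R) :
  exists M, forall tau i k, (`[0, t]%classic : set R) tau -> `|expm A (t - tau) i k| <= M.
Proof.
have [m [m0 hA]] := mat_bound A.
exists (expR (t * (n%:R * m))) => tau i k.
rewrite /= in_itv /= => /andP[h0 h1].
apply: le_trans (expm_bound _ _ _ hA m0) _.
rewrite ler_expR ler_wpM2r ?mulr_ge0 // ger0_norm ?subr_ge0 //.
by rewrite lerBlDr lerDl.
Qed.

Lemma EC_bnd (R : realType) n m (A : 'M[R]_n) (C : 'M[R]_(n, m)) (t : R) i l :
  exists M, forall tau, (`[0, t]%classic : set R) tau -> `|(expm A (t - tau) *m C) i l| <= M.
Proof.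
have [M hM] := E_bnd A t.
exists (\sum_k M * `|C k l|) => tau ht; rewrite mxE.
apply: le_trans (ler_norm_sum _ _ _) _; apply: ler_sum => k _.
rewrite normrM ler_wpM2r //; exact: hM.
Qed.

Lemma itv_fin (R : realType) (t : R) :
  (lebesgue_measure (`[0%R, t]%classic : set R) < +oo)%E.
Proof. by rewrite lebesgue_measure_itv /=; case: ifP => _; rewrite ?ltry. Qed.

Lemma int_bdd (R : realType) (t : R) (f : R -> R) :
  measurable_fun (`[0, t]%classic : set R) f ->
  (exists M, forall x, (`[0, t]%classic : set R) x -> `|f x| <= M) ->
  (@lebesgue_measure R).-integrable `[0, t] (EFin \o f).
Proof.
move=> mf [M hM]; apply: measurable_bounded_integrable => //; first exact: itv_fin.
exact: bounded_of hM.
Qed.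

Lemma int_sumR (R : realType) (I : Type) (s : seq I) (f : I -> R -> R) (D : set R) :
  measurable D -> (forall l, (@lebesgue_measure R).-integrable D (EFin \o f l)) ->
  (@lebesgue_measure R).-integrable D (EFin \o (fun x => \sum_(l <- s) f l x)).
Proof.
move=> mD hf; elim: s => [|a s IH].
  rewrite (_ : (EFin \o _) = cst 0%E); first exact: integrable0.
  by apply/funext => x /=; rewrite big_nil.
rewrite (_ : (EFin \o _) = ((EFin \o f a) \+ (EFin \o (fun x => (\sum_(l <- s) f l x)%R)))%E).
  exact: integrableD.
by apply/funext => x /=; rewrite big_cons EFinD.
Qed.

Lemma Rint_sum (R : realType) (I : Type) (s : seq I) (f : I -> R -> R) (D : set R) :
  measurable D -> (forall l, (@lebesgue_measure R).-integrable D (EFin \o f l)) ->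
  \int[lebesgue_measure]_(x in D) (\sum_(l <- s) f l x) =
  \sum_(l <- s) \int[lebesgue_measure]_(x in D) f l x.
Proof.
move=> mD hf; elim: s => [|a s IH].
  rewrite big_nil; transitivity (\int[@lebesgue_measure R]_(x in D) (0 : R)).
    by apply: eq_Rintegral => x _; rewrite big_nil.
  by rewrite Rintegral_cst // mul0r.
rewrite big_cons -IH.
transitivity (\int[@lebesgue_measure R]_(x in D) (f a x + \sum_(l <- s) f l x)).
  by apply: eq_Rintegral => x _; rewrite big_cons.
rewrite RintegralD //; exact: int_sumR.
Qed.

Lemma int_prod (R : realType) (I : Type) (s : seq I) (h f : I -> R -> R) (t : R) :
  (forall l, measurable_fun (`[0, t]%classic : set R) (h l)) ->
  (forall l, exists M, forall x, (`[0, t]%classic : set R) x -> `|h l x| <= M) ->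
  (forall l, (@lebesgue_measure R).-integrable `[0, t] (EFin \o f l)) ->
  (@lebesgue_measure R).-integrable `[0, t] (EFin \o (fun x => \sum_(l <- s) h l x * f l x)).
Proof.
move=> mh bh hf; apply: int_sumR => // l.
rewrite (_ : (EFin \o _) = ((EFin \o h l) \* (EFin \o f l))%E); last first.
  by apply/funext => x /=; rewrite EFinM.
have [M hM] := bh l.
apply: integrableMr => //; [exact: mh | exact: bounded_of hM].
Qed.
Lemma p_bnd (R : realType) Np (tf : R) (pmin pmax : 'cV[R]_Np) (p : R -> 'cV[R]_Np) t :
  0 <= t <= tf -> vle 0 pmin -> power_ok tf pmin pmax p ->
  forall x j, (`[0, t]%classic : set R) x -> 0 <= p x j 0 <= pmax j 0.
Proof.
move=> /andP[t0 ttf] hmin hp x j; rewrite /= in_itv /= => /andP[x0 xt].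
have hx : 0 <= x <= tf by rewrite x0 (le_trans xt ttf).
have [h1 h2] := hp x hx.
have := hmin j 0; rewrite mxE => hm.
by rewrite (le_trans hm (h1 j 0)) h2.
Qed.

Lemma p_int (R : realType) Np (tf : R) (pmin pmax : 'cV[R]_Np) (p : R -> 'cV[R]_Np) t :
  0 <= t <= tf -> vle 0 pmin -> (forall j, measurable_fun setT (fun tau => p tau j 0)) ->
  power_ok tf pmin pmax p ->
  forall j, (@lebesgue_measure R).-integrable `[0, t] (EFin \o (fun tau => p tau j 0)).
Proof.
move=> ht hmin hm hp j; apply: int_bdd.
  exact: measurable_funS (hm j).
exists (pmax j 0) => x Dx.
have /andP[h1 h2] := p_bnd ht hmin hp j Dx.
by rewrite ger0_norm.
Qed.

Lemma Fint (R : realType) n m (A : 'M[R]_n) (C : 'M[R]_(n, m)) (q : R -> 'cV[R]_m) t i :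
  0 <= t ->
  (forall l, (@lebesgue_measure R).-integrable `[0, t] (EFin \o (fun tau => q tau l 0))) ->
  (@lebesgue_measure R).-integrable `[0, t]
     (EFin \o (fun tau => (expm A (t - tau) *m C *m q tau) i 0)).
Proof.
move=> t0 hq.
rewrite (_ : (fun tau => _) = (fun tau => \sum_(l <- index_enum 'I_m)
            (expm A (t - tau) *m C) i l * q tau l 0)); last first.
  by apply/funext => tau; rewrite mxE.
apply: int_prod => // l; [exact: EC_meas | exact: EC_bnd].
Qed.

Lemma state_dec (R : realType) Nx Np Nd (A : 'M[R]_Nx) (Bp : 'M[R]_(Nx, Np))
  (Bd : 'M[R]_(Nx, Nd)) (x0 : 'cV[R]_Nx) (d : R -> 'cV[R]_Nd) (p : R -> 'cV[R]_Np) t i :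
  0 <= t ->
  (forall k, (@lebesgue_measure R).-integrable `[0, t] (EFin \o (fun tau => d tau k 0))) ->
  (forall j, (@lebesgue_measure R).-integrable `[0, t] (EFin \o (fun tau => p tau j 0))) ->
  state A Bp Bd x0 d p t i 0 =
  (expm A t *m x0) i 0 +
  \int[lebesgue_measure]_(tau in `[0, t]) (expm A (t - tau) *m Bd *m d tau) i 0 +
  bvec A Bp p t i 0.
Proof.
move=> t0 hd hp; rewrite /state /bvec !mxE -addrA; congr (_ + _).
transitivity (\int[@lebesgue_measure R]_(tau in `[0, t])
  ((expm A (t - tau) *m Bd *m d tau) i 0 + (expm A (t - tau) *m Bp *m p tau) i 0)).
  by apply: eq_Rintegral => tau _; rewrite mulmxDr !mulmxA mxE.
apply: RintegralD => //; exact: Fint.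
Qed.

Lemma bvec_eq (R : realType) Nx Np (A : 'M[R]_Nx) (Bp : 'M[R]_(Nx, Np))
  (p : R -> 'cV[R]_Np) t i :
  bvec A Bp p t i 0 = \int[lebesgue_measure]_(tau in `[0, t])
     (\sum_(j <- index_enum 'I_Np) (expm A (t - tau) *m Bp) i j * p tau j 0).
Proof. by rewrite /bvec mxE; apply: eq_Rintegral => tau _; rewrite mxE. Qed.

Lemma Rint_lin (R : realType) Np (c : 'I_Np -> R) (p : R -> 'cV[R]_Np) t :
  (forall j, (@lebesgue_measure R).-integrable `[0, t] (EFin \o (fun tau => p tau j 0))) ->
  \int[lebesgue_measure]_(tau in `[0, t]) (\sum_(j <- index_enum 'I_Np) c j * p tau j 0) =
  \sum_(j <- index_enum 'I_Np) c j * \int[lebesgue_measure]_(tau in `[0, t]) p tau j 0.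
Proof.
move=> hp; rewrite Rint_sum //.
  by apply: eq_bigr => j _; rewrite RintegralZl.
move=> j; rewrite (_ : (EFin \o _) = ((EFin \o cst (c j)) \* (EFin \o (fun tau => p tau j 0)%R))%E); last first.
  by apply/funext => x /=; rewrite EFinM.
apply: integrableMr => //; apply: (@bounded_of _ _ _ `|c j|) => x _ /=; exact: lexx.
Qed.

Lemma bvec_up (R : realType) Nx Np (A : 'M[R]_Nx) (Bp : 'M[R]_(Nx, Np))
  (p : R -> 'cV[R]_Np) t i (al : 'M[R]_(Nx, Np)) :
  0 <= t ->
  (forall j, (@lebesgue_measure R).-integrable `[0, t] (EFin \o (fun tau => p tau j 0))) ->
  (forall tau j, (`[0, t]%classic : set R) tau -> 0 <= p tau j 0) ->
  (forall tau j, (`[0, t]%classic : set R) tau -> (expm A (t - tau) *m Bp) i j <= al i j) ->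
  bvec A Bp p t i 0 <= \sum_(j <- index_enum 'I_Np) al i j * \int[lebesgue_measure]_(tau in `[0, t]) p tau j 0.
Proof.
move=> t0 hp hp0 hal; rewrite bvec_eq -Rint_lin //.
apply: le_Rintegral => //.
- apply: int_prod => // l; [exact: EC_meas | exact: EC_bnd].
- apply: int_prod => // l; exists `|al i l| => x _; done.
- move=> tau ht; apply: ler_sum => j _; apply: ler_wpM2r; [exact: hp0 | exact: hal].
Qed.

Lemma bvec_lo (R : realType) Nx Np (A : 'M[R]_Nx) (Bp : 'M[R]_(Nx, Np))
  (p : R -> 'cV[R]_Np) t i (be : 'M[R]_(Nx, Np)) :
  0 <= t ->
  (forall j, (@lebesgue_measure R).-integrable `[0, t] (EFin \o (fun tau => p tau j 0))) ->
  (forall tau j, (`[0, t]%classic : set R) tau -> 0 <= p tau j 0) ->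
  (forall tau j, (`[0, t]%classic : set R) tau -> be i j <= (expm A (t - tau) *m Bp) i j) ->
  \sum_(j <- index_enum 'I_Np) be i j * \int[lebesgue_measure]_(tau in `[0, t]) p tau j 0 <= bvec A Bp p t i 0.
Proof.
move=> t0 hp hp0 hal; rewrite bvec_eq -Rint_lin //.
apply: le_Rintegral => //.
- apply: int_prod => // l; exists `|be i l| => x _; done.
- apply: int_prod => // l; [exact: EC_meas | exact: EC_bnd].
- move=> tau ht; apply: ler_sum => j _; apply: ler_wpM2r; [exact: hp0 | exact: hal].
Qed.

Unset Implicit Arguments.
Theorem theorem3 (R : realType) (Nx Np Nd : nat)
  (A : 'M[R]_Nx) (Bp : 'M[R]_(Nx, Np)) (Bd : 'M[R]_(Nx, Nd))
  (x0 : 'cV[R]_Nx) (d : R -> 'cV[R]_Nd) (tf : R)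
  (pmin pmax : 'cV[R]_Np) (xmin xmax : 'cV[R]_Nx)
  (pplus pminus pa : R -> 'cV[R]_Np) (Eup Edown : R -> 'cV[R]_Np) :
  0 <= tf ->
  (forall i, A i i <= 0) ->
  (forall i j, i != j -> 0 <= A i j) ->
  (forall i j, 0 <= Bp i j) ->
  (forall k, (@lebesgue_measure R).-integrable `[0, tf] (fun t => (d t k 0)%:E)) ->
  vle 0 pmin -> vle pmin pmax -> vle xmin xmax ->
  feasible A Bp Bd x0 d tf pmin pmax xmin xmax pplus ->
  feasible A Bp Bd x0 d tf pmin pmax xmin xmax pminus ->
  (forall t, 0 <= t <= tf ->
     optimal (alpha A Bp t) (beta A Bp t) (bvec A Bp pplus t) (bvec A Bp pminus t)
             (Eup t) (Edown t)) ->
  (forall i, measurable_fun setT (fun t => pa t i 0)) ->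
  power_ok tf pmin pmax pa ->
  (forall i t, 0 <= t <= tf ->
     Edown t i 0 <= \int[lebesgue_measure]_(tau in `[0, t]) pa tau i 0 <= Eup t i 0) ->
  forall t, 0 <= t <= tf ->
    vle xmin (state A Bp Bd x0 d pa t) /\ vle (state A Bp Bd x0 d pa t) xmax.
Proof.
move=> tf0 hAd hAo hBp hd hpmin _ _ [mplus [pwplus hplus]] [mminus [pwminus hminus]]
  hopt hpam hpa hE t ht.
have /andP[t0 ttf] := ht.
have [[hup [hlo _]] _] := hopt t ht.
have hdt : forall k, (@lebesgue_measure R).-integrable `[0, t] (EFin \o (fun tau => d tau k 0)).
  move=> k; apply: integrableS (hd k) => //.
  by move=> x; rewrite /= !in_itv /= => /andP[-> xt]; rewrite (le_trans xt ttf).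
have ipa := p_int ht hpmin hpam hpa.
have ipl := p_int ht hpmin mplus pwplus.
have imi := p_int ht hpmin mminus pwminus.
have pa0 : forall tau j, (`[0, t]%classic : set R) tau -> 0 <= pa tau j 0.
  by move=> tau j Dt; have /andP[] := p_bnd ht hpmin hpa j Dt.
have D0 : (`[0, t]%classic : set R) 0 by rewrite /= in_itv /= lexx t0.
have hM0 : forall tau i j, (`[0, t]%classic : set R) tau -> 0 <= (expm A (t - tau) *m Bp) i j.
  move=> tau i j; rewrite /= in_itv /= => /andP[_ tt]; rewrite mxE.
  apply: sumr_ge0 => k _; apply: mulr_ge0 => //.
  by apply: expm_nonneg => //; rewrite subr_ge0.
have halpha : forall tau i j, (`[0, t]%classic : set R) tau ->
    (expm A (t - tau) *m Bp) i j <= alpha A Bp t i j.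
  move=> tau i j Dt; rewrite [X in _ <= X]mxE.
  have [B hB] := EC_bnd A Bp t i j.
  have hub : has_ubound [set (expm A (t - tau0) *m Bp) i j | tau0 in `[0, t]%classic].
    by exists B => y [tau0 Dt0 <-]; exact: le_trans (ler_norm _) (hB _ Dt0).
  by apply: (ub_le_sup hub); exists tau.
have hbeta : forall tau i j, (`[0, t]%classic : set R) tau ->
    beta A Bp t i j <= (expm A (t - tau) *m Bp) i j.
  move=> tau i j Dt; rewrite [X in X <= _]mxE.
  have hlb : has_lbound [set (expm A (t - tau0) *m Bp) i j | tau0 in `[0, t]%classic].
    by exists 0 => y [tau0 Dt0 <-]; exact: hM0.
  by apply: (ge_inf hlb); exists tau.
have alpha0 : forall i j, 0 <= alpha A Bp t i j.
  by move=> i j; apply: le_trans (hM0 _ i j D0) (halpha _ i j D0).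
have beta0 : forall i j, 0 <= beta A Bp t i j.
  move=> i j; rewrite mxE; apply: lb_le_inf.
    by exists ((expm A (t - 0) *m Bp) i j); exists 0.
  by move=> y [tau0 Dt0 <-]; exact: hM0.
split => i j; rewrite (ord1 j).
- apply: le_trans (proj1 (hminus t ht) i 0) _.
  rewrite (state_dec _ _ _ _ _ t0 hdt imi) (state_dec _ _ _ _ _ t0 hdt ipa) lerD2l.
  apply: le_trans (hlo i 0) _; rewrite mxE.
  apply: le_trans (bvec_lo t0 ipa pa0 (fun tau j Dt => hbeta tau i j Dt)).
  apply: ler_sum => k _; apply: ler_wpM2l => //.
  by have /andP[] := hE k t ht.
- apply: le_trans _ (proj2 (hplus t ht) i 0).
  rewrite (state_dec _ _ _ _ _ t0 hdt ipl) (state_dec _ _ _ _ _ t0 hdt ipa) lerD2l.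
  apply: le_trans _ (hup i 0); rewrite [X in _ <= X]mxE.
  apply: le_trans (bvec_up t0 ipa pa0 (fun tau j Dt => halpha tau i j Dt)) _.
  apply: ler_sum => k _; apply: ler_wpM2l => //.
  by have /andP[] := hE k t ht.
Qed.
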